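(* Let $M$ be a $\mathfrak D$-module (not necessarily a weight module) on which the subalgebra $\mathfrak D^+$ acts locally finitely. Then: (i) $M$ contains a nonzero vector $v$ such that $\mathfrak D^+v\subseteq\mathbb Cv$; (ii) if $M$ is simple, then $M$ is a Whittaker module or a highest weight module.
   Context: $\mathfrak D$ is the Lie algebra with basis $\{d_m,h_r,\mathbf c_1,\mathbf c_2:m\in\mathbb Z,r\in\frac12+\mathbb Z\}$ and brackets $[d_m,d_n]=(m-n)d_{m+n}+\delta_{m+n,0}\frac{m^3-m}{12}\mathbf c_1$, $[d_m,h_r]=-rh_{m+r}$, $[h_r,h_s]=r\delta_{r+s,0}\mathbf c_2$, with $\mathbf c_1,\mathbf c_2$ central. $\mathfrak D^{\pm}=\bigoplus_{n\ge1}\mathbb Cd_{\pm n}\oplus\bigoplus_{r\in\frac12+\mathbb N}\mathbb Ch_{\pm r}$, $\mathfrak D^0=\mathbb Cd_0\oplus\mathbb C\mathbf c_1\oplus\mathbb C\mathbf c_2$. $\mathfrak D^+$ acts locally finitely on $M$ if every vector lies in a finite-dimensional $\mathfrak D^+$-submodule. A Whittaker module is a module generated by a nonzero vector $v$ with $xv=\varphi(x)v$ ($x\in\mathfrak D^+$) for some Lie algebra homomorphism $\varphi:\mathfrak D^+\to\mathbb C$; a highest weight module is a module generated by a nonzero vector $v$ with $\mathfrak D^+v=0$ and $\mathfrak D^0v\subseteq\mathbb Cv$. *)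

(* Defs.v *)
From HB Require Import structures.
From mathcomp Require Import all_boot all_order all_algebra.
From mathcomp Require Import complex.
From mathcomp Require Import reals.
Set Implicit Arguments. Unset Strict Implicit. Unset Printing Implicit Defensive.
Import Order.TTheory GRing.Theory Num.Theory.
Local Open Scope ring_scope.

(* Indexing conventions.
   d m      (m : int)  acts as d_m.
   h k      (k : int)  acts as h_{k + 1/2}  (so r = k + 1/2 ranges over 1/2 + Z).
   c1, c2              act as the central elements c_1, c_2.
   D^+ has basis d_n (n >= 1) and h_{k+1/2} (k >= 0), i.e. h_r, r in 1/2 + N.
   D^0 has basis d_0, c_1, c_2. *)

Section Dalg.
Variable R : realType.
Local Notation C := (R[i]).
Variable M : lmodType C.

Definition hidx (k : int) : C := k%:~R + 2^-1.

Definition is_Dmodule (d h : int -> M -> M) (c1 c2 : M -> M) : Prop :=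
  [/\ [/\ (forall m, linear (d m)), (forall k, linear (h k)), linear c1 & linear c2],
   (forall m n x, d m (d n x) - d n (d m x) =
        (m - n)%:~R *: d (m + n)%R x
        + (if (m + n == 0)%R then ((m ^+ 3 - m)%:~R / 12%:R) *: c1 x else 0)),
   (forall m k x, d m (h k x) - h k (d m x) = - hidx k *: h (m + k)%R x),
   (forall k l x, h k (h l x) - h l (h k x) =
        (if (k + l + 1 == 0)%R then hidx k *: c2 x else 0)) &
   [/\ (forall m x, c1 (d m x) = d m (c1 x)), (forall k x, c1 (h k x) = h k (c1 x)),
       (forall m x, c2 (d m x) = d m (c2 x)), (forall k x, c2 (h k x) = h k (c2 x))
     & (forall x, c1 (c2 x) = c2 (c1 x))]].

Definition span_seq (s : seq M) : M -> Prop :=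
  fun x => exists c : nat -> C, x = \sum_(i < size s) c i *: s`_i.

Definition Dplus_locally_finite (d h : int -> M -> M) : Prop :=
  forall v : M, exists s : seq M, span_seq s v /\
    (forall n : int, (1 <= n)%R -> forall x, span_seq s x -> span_seq s (d n x)) /\
    (forall k : int, (0 <= k)%R -> forall x, span_seq s x -> span_seq s (h k x)).

Definition is_Dsubmodule (d h : int -> M -> M) (c1 c2 : M -> M) (W : M -> Prop) : Prop :=
  [/\ W 0, (forall a x y, W x -> W y -> W (a *: x + y)),
      (forall m x, W x -> W (d m x)), (forall k x, W x -> W (h k x)) &
      (forall x, W x -> W (c1 x) /\ W (c2 x))].

Definition generated_by (d h : int -> M -> M) (c1 c2 : M -> M) (v : M) : Prop :=
  forall W, is_Dsubmodule d h c1 c2 W -> W v -> forall x, W x.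

Definition Dsimple (d h : int -> M -> M) (c1 c2 : M -> M) : Prop :=
  (exists x : M, x != 0) /\
  forall W, is_Dsubmodule d h c1 c2 W ->
    (forall x, W x -> x = 0) \/ (forall x, W x).

(* Lie algebra homomorphisms D^+ -> C, given by their values on the basis
   d_n (n >= 1), h_{k+1/2} (k >= 0): they must kill [D^+, D^+], which is spanned by
   [d_m,d_n] = (m-n) d_{m+n}, [d_m,h_r] = -r h_{m+r}, [h_r,h_s] = 0 (r,s > 0). *)
Definition Dplus_lie_hom (phid phih : int -> C) : Prop :=
  (forall m n : int, (1 <= m)%R -> (1 <= n)%R -> (m - n)%:~R * phid (m + n)%R = 0) /\
  (forall (m k : int), (1 <= m)%R -> (0 <= k)%R -> - hidx k * phih (m + k)%R = 0).

Definition is_Whittaker_module (d h : int -> M -> M) (c1 c2 : M -> M) : Prop :=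
  exists v : M, [/\ v != 0, generated_by d h c1 c2 v &
    exists phid phih : int -> C, [/\ Dplus_lie_hom phid phih,
      (forall n : int, (1 <= n)%R -> d n v = phid n *: v) &
      (forall k : int, (0 <= k)%R -> h k v = phih k *: v)]].

Definition is_highest_weight_module (d h : int -> M -> M) (c1 c2 : M -> M) : Prop :=
  exists v : M, [/\ v != 0, generated_by d h c1 c2 v,
    (forall n : int, (1 <= n)%R -> d n v = 0),
    (forall k : int, (0 <= k)%R -> h k v = 0) &
    [/\ exists a : C, d 0 v = a *: v, exists a : C, c1 v = a *: v &
        exists a : C, c2 v = a *: v]].

Definition Dplus_stable_line (d h : int -> M -> M) (v : M) : Prop :=
  (forall n : int, (1 <= n)%R -> exists a : C, d n v = a *: v) /\
  (forall k : int, (0 <= k)%R -> exists a : C, h k v = a *: v).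

End Dalg.

(* Main.v *)
Require Import Defs.
Set Warnings "-notation-overridden -ambiguous-paths -notation-incompatible-prefix".
From HB Require Import structures.
From mathcomp Require Import all_boot all_order all_algebra.
From mathcomp Require Import complex.
From mathcomp Require Import reals.
From mathcomp Require Import zify ring lra.
From Stdlib Require Classical_Prop Classical_Pred_Type ClassicalEpsilon.
Set Implicit Arguments. Unset Strict Implicit. Unset Printing Implicit Defensive.
Import Order.TTheory GRing.Theory Num.Theory.
Local Open Scope ring_scope.
Section Eig.
Variable C : numClosedFieldType.
Variable n : nat.

Lemma eig_step (S A : 'M[C]_n) : S != 0 -> stablemx S A ->
  exists a (E : 'M[C]_n), [/\ E != 0, (E <= S)%MS, E *m A = a *: E &
    forall B, stablemx S B -> S *m (A *m B - B *m A) = 0 -> stablemx E B].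
Proof.
move=> S0 sSA.
have r0 : (0 < \rank S)%N by rewrite lt0n mxrank_eq0.
have [a /eigenvalueP [w wA w0]] := eigenvalue_closed (restrictmx S A) r0.
have sbA : stablemx (row_base S) A by rewrite stablemx_row_base.
have eqA : restrictmx S A *m row_base S = row_base S *m A.
  by rewrite /conjmx mulmxKpV.
set v := w *m row_base S.
have v0 : v != 0 by rewrite mulmx_free_eq0 ?row_base_free.
have vA : v *m A = a *: v by rewrite /v -mulmxA -eqA mulmxA wA scalemxAl.
exists a, (S :&: kermx (A - a%:M))%MS; split.
- apply: contraNneq v0 => E0; rewrite -submx0 -E0 sub_capmx; apply/andP; split.
    by rewrite /v (submx_trans (submxMl _ _)) // eq_row_base.
  by apply/sub_kermxP; rewrite mulmxBr mul_mx_scalar vA subrr.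
- exact: capmxSl.
- apply/eqP; rewrite -subr_eq0 -mul_mx_scalar -mulmxBr; apply/eqP/sub_kermxP.
  exact: capmxSr.
move=> B sSB hc; rewrite sub_capmx; apply/andP; split.
  by rewrite (submx_trans (submxMr _ (capmxSl _ _))).
set E := (S :&: kermx (A - a%:M))%MS.
have EA : E *m A = a *: E.
  apply/eqP; rewrite -subr_eq0 -mul_mx_scalar -mulmxBr; apply/eqP/sub_kermxP.
  exact: capmxSr.
have /submxP [W EW] : (E <= S)%MS by exact: capmxSl.
have EAB : E *m (A *m B - B *m A) = 0 by rewrite EW -mulmxA hc mulmx0.
apply/sub_kermxP; rewrite mulmxBr mul_mx_scalar -mulmxA.
move/eqP: EAB; rewrite mulmxBr subr_eq0 => /eqP <-.
by rewrite mulmxA EA -scalemxAl subrr.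
Qed.

Lemma restr_eq (E A : 'M[C]_n) : stablemx E A ->
  restrictmx E A *m row_base E = row_base E *m A.
Proof. by move=> sEA; rewrite /conjmx mulmxKpV // stablemx_row_base. Qed.

Lemma trace_step (E A B : 'M[C]_n) mu : E != 0 -> stablemx E A -> stablemx E B ->
  E *m (A *m B - B *m A) = mu *: E -> mu = 0.
Proof.
move=> E0 sA sB hE.
have r0 : (0 < \rank E)%N by rewrite lt0n mxrank_eq0.
have hA := restr_eq sA; have hB := restr_eq sB.
have /submxP [W PW] : (row_base E <= E)%MS by rewrite eq_row_base.
have h1 : (restrictmx E A *m restrictmx E B - restrictmx E B *m restrictmx E A - mu%:M)
   *m row_base E = 0.
  have hAB : restrictmx E A *m restrictmx E B *m row_base E = row_base E *m (A *m B).
    by rewrite -mulmxA hB mulmxA hA mulmxA.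
  have hBA : restrictmx E B *m restrictmx E A *m row_base E = row_base E *m (B *m A).
    by rewrite -mulmxA hA mulmxA hB mulmxA.
  rewrite !mulmxBl mul_scalar_mx hAB hBA -mulmxBr PW -mulmxA hE -scalemxAr subrr //.
move/eqP: h1; rewrite mulmx_free_eq0 ?row_base_free // subr_eq0 => /eqP h1.
have := congr1 mxtrace h1; rewrite mxtraceD raddfN /= mxtrace_mulC subrr mxtrace_scalar.
by move/eqP; rewrite eq_sym mulrn_eq0 -[_ == 0%N]negbK -lt0n r0 /= => /eqP.
Qed.
End Eig.
Section Core.
Variable C : numClosedFieldType.
Variable n : nat.
Variables D H : int -> 'M[C]_n.
Let hx (k : int) : C := k%:~R + 2^-1.
Hypothesis RD : forall m l : int, (1 <= m) -> (1 <= l) ->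
  D l *m D m - D m *m D l = (m - l)%:~R *: D (m + l).
Hypothesis RDH : forall m k : int, (1 <= m) -> (0 <= k) ->
  H k *m D m - D m *m H k = - hx k *: H (m + k).
Hypothesis RH : forall k l : int, (0 <= k) -> (0 <= l) ->
  H l *m H k - H k *m H l = 0.

Lemma hx_neq0 k : 0 <= k -> hx k != 0.
Proof.
move=> k0; rewrite /hx; apply/lt0r_neq0/ltr_wpDl; first by rewrite ler0z.
by rewrite invr_gt0 ltr0n.
Qed.

Lemma intr_neq0 (z : int) : z != 0 -> (z%:~R : C) != 0.
Proof. by rewrite intr_eq0. Qed.

Lemma shift_lemma N : forall (p : int) (a : nat -> C), 1 <= p ->
  \sum_(i < N) a i *: D (p + i%:Z) = 0 -> (exists i : 'I_N, a i != 0) ->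
  exists j, 1 <= j /\ D j = 0.
Proof.
elim: N => [|N IH] p a p1 hs [i0 ai0]; first by case: i0 ai0.
move: hs; rewrite big_ord_recr /= => hs.
have [/existsP [i1 ai1]|none] := boolP [exists i : 'I_N, a i != 0]; last first.
  have z : \sum_(i < N) a i *: D (p + i%:Z) = 0.
    apply: big1 => i _; move/existsPn: none => /(_ i); rewrite negbK => /eqP ->.
    by rewrite scale0r.
  have aN : a N != 0.
    have [lt|ge] := ltnP i0 N.
      by move/existsPn: none => /(_ (Ordinal lt)); rewrite negbK /= => /eqP h; rewrite h eqxx in ai0.
    have -> : N = i0 by have := ltn_ord i0; lia.
    exact: ai0.
  move: hs; rewrite z add0r => /eqP; rewrite scaler_eq0 (negbTE aN) /= => DN.
  by exists (p + N%:Z); split; [lia | exact/eqP].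
set q := p + N%:Z.
have q1 : 1 <= q by rewrite /q; lia.
have key : D q *m (\sum_(i < N.+1) a i *: D (p + i%:Z)) -
           (\sum_(i < N.+1) a i *: D (p + i%:Z)) *m D q = 0.
  by rewrite big_ord_recr /= hs mulmx0 mul0mx subrr.
move: key; rewrite mulmx_sumr mulmx_suml -sumrB.
have e : forall i : 'I_N.+1, D q *m (a i *: D (p + i%:Z)) - (a i *: D (p + i%:Z)) *m D q
   = a i *: (((p + i%:Z) - q)%:~R *: D ((p + i%:Z) + q)).
  by move=> i; rewrite -scalemxAr -scalemxAl -scalerBr RD //; lia.
rewrite (eq_bigr _ (fun i _ => e i)).
rewrite big_ord_recr /= /q.
have -> : p + N%:Z - (p + N%:Z) = 0 by lia.
rewrite scale0r scaler0 addr0 => key.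
apply: (IH (p + q) (fun i => a i * (i%:Z - N%:Z)%:~R)).
- rewrite /q; lia.
- rewrite -[RHS]key; apply: eq_bigr => i _.
  rewrite scalerA; congr (_ *: D _); last by rewrite /q; lia.
  congr (_ * _%:~R); lia.
exists i1; rewrite mulf_neq0 // intr_neq0 //.
have := ltn_ord i1; lia.
Qed.

Lemma some_D_zero : exists j, 1 <= j /\ D j = 0.
Proof.
pose X := \matrix_(i < (n * n).+1) mxvec (D (1 + i%:Z)).
have nf : ~~ row_free X.
  rewrite /row_free; apply/negP => /eqP h.
  by have := rank_leq_col X; rewrite h ltnn.
move: nf; rewrite -kermx_eq0 => /rowV0Pn [v /sub_kermxP vX v0].
move/rV0Pn: v0 => [i0 vi0].
apply: (shift_lemma (N := (n * n).+1) (p := 1) (a := fun i => v 0 (inord i))) => //.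
  apply: (can_inj (@mxvecK _ n n)); rewrite linear_sum linear0 /=.
  rewrite -[RHS]vX mulmx_sum_row; apply: eq_bigr => i _.
  by rewrite linearZ /= rowK inord_val.
by exists i0; rewrite inord_val.
Qed.

Lemma big_vanish : exists N0, 1 <= N0 /\ (forall m, N0 <= m -> D m = 0) /\
  (forall k, N0 <= k -> H k = 0).
Proof.
have [j [j1 Dj]] := some_D_zero.
have hD : forall m, 2 * j + 1 <= m -> D m = 0.
  move=> m hm; have := RD (m := m - j) (l := j) ltac:(lia) j1.
  rewrite Dj mul0mx mulmx0 subrr.
  have -> : m - j + j = m by lia.
  move/esym/eqP; rewrite scaler_eq0 intr_eq0 => /orP [/eqP h|/eqP //].
  lia.
exists (2 * j + 1); split; first lia.
split => // k hk.
have := RDH (m := 2 * j + 1) (k := k - (2 * j + 1)) ltac:(lia) ltac:(lia).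
rewrite hD // mul0mx mulmx0 subrr.
have -> : 2 * j + 1 + (k - (2 * j + 1)) = k by lia.
move/esym/eqP; rewrite scaler_eq0 oppr_eq0 (negbTE (hx_neq0 _)) /=; last lia.
by move/eqP.
Qed.

Definition isop (B : 'M[C]_n) :=
  (exists m, 1 <= m /\ B = D m) \/ (exists k, 0 <= k /\ B = H k).
Definition stab (S : 'M[C]_n) := forall B, isop B -> stablemx S B.

Lemma eig_wrap S X : S != 0 -> stab S -> isop X ->
  (forall B, isop B -> S *m (X *m B - B *m X) = 0) ->
  exists a E, [/\ E != 0, (E <= S)%MS, E *m X = a *: E & stab E].
Proof.
move=> S0 sS oX hc.
have [a [E [E0 ES EX hB]]] := eig_step S0 (sS X oX).
exists a, E; split => // B oB; apply: hB; [exact: sS | exact: hc].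
Qed.

Lemma sub_kill p (E : 'M[C]_(p, n)) (S Y : 'M[C]_n) : (E <= S)%MS -> S *m Y = 0 -> E *m Y = 0.
Proof. by move=> /submxP [W ->] h; rewrite -mulmxA h mulmx0. Qed.

Lemma sub_eig p (E : 'M[C]_(p, n)) (S Y : 'M[C]_n) a : (E <= S)%MS -> S *m Y = a *: S -> E *m Y = a *: E.
Proof. by move=> /submxP [W ->] h; rewrite -mulmxA h scalemxAr. Qed.

Lemma stab1 : stab 1%:M.
Proof. by move=> B _; exact: submx1. Qed.

Definition QH K := exists S : 'M[C]_n, [/\ S != 0, stab S & forall k, K <= k -> S *m H k = 0].

Lemma QH_step K : 1 <= K -> QH (K + 1) -> QH K.
Proof.
move=> K1 [S [S0 sS kS]].
have oX : isop (H K) by right; exists K; split => //; lia.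
have [a [E [E0 ES EX sE]]] : exists a E, [/\ E != 0, (E <= S)%MS, E *m H K = a *: E & stab E].
  apply: eig_wrap => // B [[m [m1 ->]]|[l [l0 ->]]].
    rewrite RDH //; last lia.
    by rewrite -scalemxAr kS ?scaler0 //; lia.
  by rewrite RH ?mulmx0 //; lia.
have a0 : a = 0.
  have oD1 : isop (D 1) by left; exists 1.
  have oHK : isop (H (K - 1)) by right; exists (K - 1); split => //; lia.
  have := trace_step (mu := - hx (K - 1) * a) E0 (sE _ oHK) (sE _ oD1).
  rewrite RDH //; last lia.
  have -> : 1 + (K - 1) = K by lia.
  rewrite -scalemxAr EX scalerA => /(_ erefl) /eqP.
  rewrite mulf_eq0 oppr_eq0 (negbTE (hx_neq0 _)) /=; last lia.
  by move/eqP.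
exists E; split => // k hk.
have [->|ne] := eqVneq k K; first by rewrite EX a0 scale0r.
apply: (sub_kill ES); apply: kS; lia.
Qed.

Lemma QH1 (n0 : (0 < n)%N) : QH 1.
Proof.
have [N0 [N01 [hD hH]]] := big_vanish.
have S0 : (1%:M : 'M[C]_n) != 0 by rewrite -mxrank_eq0 mxrank1 -lt0n.
suff : forall t : nat, forall K, 1 <= K -> N0 <= K + t%:Z -> QH K.
  move=> /(_ `|N0|%N 1 (lexx _)); apply; lia.
elim => [|t IH] K K1 hK.
  exists 1%:M; split => // [|k hk]; first exact: stab1.
  by rewrite hH ?mulmx0 //; lia.
apply: QH_step => //; apply: IH; lia.
Qed.

Definition QD M := exists S : 'M[C]_n, [/\ S != 0, stab S,
  forall k, 1 <= k -> S *m H k = 0 & forall m, M <= m -> S *m D m = 0].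

Lemma QD_step M : 3 <= M -> QD (M + 1) -> QD M.
Proof.
move=> M3 [S [S0 sS kH kD]].
have oX : isop (D M) by left; exists M; split => //; lia.
have [a [E [E0 ES EX sE]]] : exists a E, [/\ E != 0, (E <= S)%MS, E *m D M = a *: E & stab E].
  apply: eig_wrap => // B [[l [l1 ->]]|[k [k0 ->]]].
    rewrite RD //; last lia.
    by rewrite -scalemxAr kD ?scaler0 //; lia.
  rewrite -opprB RDH //; last lia.
  by rewrite mulmxN -scalemxAr kH ?scaler0 ?oppr0 //; lia.
have a0 : a = 0.
  have oD1 : isop (D 1) by left; exists 1.
  have oDM : isop (D (M - 1)) by left; exists (M - 1); split => //; lia.
  have := trace_step (mu := (1 - (M - 1))%:~R * a) E0 (sE _ oDM) (sE _ oD1).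
  rewrite RD //; last lia.
  have -> : 1 + (M - 1) = M by lia.
  rewrite -scalemxAr EX scalerA => /(_ erefl) /eqP.
  rewrite mulf_eq0 intr_eq0.
  have -> : (1 - (M - 1) == 0) = false by apply/eqP; lia.
  by move/eqP.
exists E; split => // [k hk|m hm]; first exact: (sub_kill ES (kH _ hk)).
have [->|ne] := eqVneq m M; first by rewrite EX a0 scale0r.
apply: (sub_kill ES); apply: kD; lia.
Qed.

Lemma QD3 (n0 : (0 < n)%N) : QD 3.
Proof.
have [N0 [N01 [hD hH]]] := big_vanish.
have [S [S0 sS kS]] := QH1 n0.
suff : forall t : nat, forall M, 3 <= M -> N0 <= M + t%:Z -> QD M.
  move=> /(_ `|N0|%N 3 (lexx _)); apply; lia.
elim => [|t IH] M M3 hM.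
  exists S; split => // m hm.
  by rewrite hD ?mulmx0 //; lia.
apply: QD_step => //; apply: IH; lia.
Qed.

Theorem core_common_eigenvector (n0 : (0 < n)%N) :
  exists c : 'rV[C]_n, [/\ c != 0,
    forall m, 1 <= m -> exists a, c *m D m = a *: c &
    forall k, 0 <= k -> exists a, c *m H k = a *: c].
Proof.
have [S [S0 sS kH kD]] := QD3 n0.
have comm_gen : forall (X : 'M[C]_n), (forall B, isop B -> S *m (X *m B - B *m X) = 0) ->
   forall E : 'M[C]_n, (E <= S)%MS -> forall B, isop B -> E *m (X *m B - B *m X) = 0.
  by move=> X hX E ES B oB; apply: (sub_kill ES); apply: hX.
have c1 : forall B, isop B -> S *m (D 1 *m B - B *m D 1) = 0.
  move=> B [[l [l1 ->]]|[k [k0 ->]]].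
    rewrite RD //; have [->|ne] := eqVneq l 1; first by rewrite subrr scale0r mulmx0.
    by rewrite -scalemxAr kD ?scaler0 //; lia.
  rewrite -opprB RDH //.
  by rewrite mulmxN -scalemxAr kH ?scaler0 ?oppr0 //; lia.
have c2 : forall B, isop B -> S *m (D 2 *m B - B *m D 2) = 0.
  move=> B [[l [l1 ->]]|[k [k0 ->]]].
    rewrite RD //; by rewrite -scalemxAr kD ?scaler0 //; lia.
  rewrite -opprB RDH //.
  by rewrite mulmxN -scalemxAr kH ?scaler0 ?oppr0 //; lia.
have c3 : forall B, isop B -> S *m (H 0 *m B - B *m H 0) = 0.
  move=> B [[m [m1 ->]]|[l [l0 ->]]].
    rewrite RDH //; by rewrite -scalemxAr kH ?scaler0 //; lia.
  by rewrite RH ?mulmx0.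
have oD1 : isop (D 1) by left; exists 1.
have oD2 : isop (D 2) by left; exists 2.
have oH0 : isop (H 0) by right; exists 0.
have [a1 [E1 [E10 E1S E1X sE1]]] := eig_wrap S0 sS oD1 c1.
have [a2 [E2 [E20 E2S E2X sE2]]] := eig_wrap E10 sE1 oD2 (comm_gen _ c2 _ E1S).
have E2S' : (E2 <= S)%MS := submx_trans E2S E1S.
have [a3 [E3 [E30 E3S E3X sE3]]] := eig_wrap E20 sE2 oH0 (comm_gen _ c3 _ E2S').
have E3S2 : (E3 <= E1)%MS := submx_trans E3S E2S.
have E3S' : (E3 <= S)%MS := submx_trans E3S E2S'.
have [c cE c0] := rowV0Pn E30.
exists c; split => // [m m1|k k0].
  have [->|ne1] := eqVneq m 1; first by exists a1; apply: (sub_eig (submx_trans cE E3S2)).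
  have [->|ne2] := eqVneq m 2; first by exists a2; apply: (sub_eig (submx_trans cE E3S)).
  exists 0; rewrite scale0r; apply: (sub_kill (submx_trans cE E3S')); apply: kD; lia.
have [->|ne] := eqVneq k 0; first by exists a3; apply: (sub_eig cE).
exists 0; rewrite scale0r; apply: (sub_kill (submx_trans cE E3S')); apply: kH; lia.
Qed.
End Core.

Section Lin.
Variable R : realType.
Local Notation C := (R[i]).
Variable M : lmodType C.

Lemma lin_props (f : M -> M) : linear f ->
  [/\ f 0 = 0, (forall u v, f (u + v) = f u + f v) & (forall a u, f (a *: u) = a *: f u)].
Proof.
move=> lf.
have f0 : f 0 = 0.
  have := lf 1 0 0; rewrite scaler0 addr0 scale1r => h.
  by move/(congr1 (fun z => z - f 0)): h; rewrite subrr addrK.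
split => //.
  by move=> u v; have := lf 1 u v; rewrite !scale1r.
move=> a u; have := lf a u 0; rewrite addr0 f0 addr0; exact.
Qed.

Variable s : seq M.
Local Notation N := (size s).
Definition phi (c : 'rV[C]_N) : M := \sum_(i < N) c 0 i *: s`_i.

Lemma phiD c c' : phi (c + c') = phi c + phi c'.
Proof. by rewrite /phi -big_split; apply: eq_bigr => i _; rewrite mxE scalerDl. Qed.
Lemma phiZ a c : phi (a *: c) = a *: phi c.
Proof. by rewrite /phi scaler_sumr; apply: eq_bigr => i _; rewrite mxE scalerA. Qed.
Lemma phi0 : phi 0 = 0.
Proof. by rewrite /phi big1 // => i _; rewrite mxE scale0r. Qed.

Lemma span_phi x : span_seq s x <-> exists c, x = phi c.
Proof.
split => [[c ->]|[c ->]].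
  by exists (\row_(i < N) c i); apply: eq_bigr => i _; rewrite mxE.
by exists (fun i => if @insub _ (fun k => (k < N)%N) 'I_N i is Some j then c 0 j else 0);
  apply: eq_bigr => i _; rewrite valK.
Qed.

Definition kerprop (Q : 'M[C]_N) := forall w : 'rV_N, phi (w *m Q) = 0.

Lemma kerprop_add Q c : kerprop Q -> phi c = 0 -> kerprop (Q + c)%MS.
Proof.
move=> kQ pc w; have /sub_addsmxP [u ->] : (w *m (Q + c)%MS <= Q + c)%MS by exact: submxMl.
by rewrite phiD kQ add0r [u.2]mx11_scalar mul_scalar_mx phiZ pc scaler0.
Qed.

Lemma exists_ker : exists Q, kerprop Q /\ forall c, phi c = 0 -> (c <= Q)%MS.
Proof.
suff : forall t Q, kerprop Q -> (N - \rank Q <= t)%N ->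
   exists Q', kerprop Q' /\ forall c, phi c = 0 -> (c <= Q')%MS.
  move=> /(_ N 0); apply; last exact: leq_subr.
  by move=> w; rewrite mulmx0 phi0.
elim => [|t IH] Q kQ hQ.
  exists Q; split => // c _; apply: submx_full.
  by rewrite /row_full eqn_leq rank_leq_col /=; move: hQ; rewrite leqn0 subn_eq0.
case: (Classical_Prop.classic (forall c, phi c = 0 -> (c <= Q)%MS)) => [h|h].
  by exists Q.
have [c hc] := Classical_Pred_Type.not_all_ex_not _ _ h.
have [pc nc] := Classical_Prop.imply_to_and _ _ hc.
apply: (IH (Q + c)%MS); first exact: kerprop_add.
have [le eq] := mxrank_leqif_sup (addsmxSl Q c).
have lt : (\rank Q < \rank (Q + c)%MS)%N.
  rewrite ltn_neqAle le andbT eq; apply/negP => /(submx_trans (addsmxSr Q c)) //.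
have := rank_leq_col (Q + c)%MS; lia.
Qed.

Section Psi.
Variable Q : 'M[C]_N.
Hypothesis kQ : kerprop Q.
Hypothesis fQ : forall c, phi c = 0 -> (c <= Q)%MS.
Definition rk := \rank (Q^C)%MS.
Definition psi (x : 'rV[C]_rk) : M := phi (x *m row_base (Q^C)%MS).

Lemma psiD x y : psi (x + y) = psi x + psi y.
Proof. by rewrite /psi mulmxDl phiD. Qed.
Lemma psiZ a x : psi (a *: x) = a *: psi x.
Proof. by rewrite /psi -scalemxAl phiZ. Qed.
Lemma psi0 : psi 0 = 0.
Proof. by rewrite /psi mul0mx phi0. Qed.
Lemma psiN x : psi (- x) = - psi x.
Proof. by have := psiD (- x) x; rewrite addNr psi0 => /esym /eqP; rewrite addr_eq0 => /eqP. Qed.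
Lemma psi_sum I (r : seq I) (P : pred I) (F : I -> 'rV_rk) :
  psi (\sum_(i <- r | P i) F i) = \sum_(i <- r | P i) psi (F i).
Proof. exact: (big_morph psi psiD psi0). Qed.

Lemma psi_eq0 x : psi x = 0 -> x = 0.
Proof.
move=> h; have xQ : (x *m row_base (Q^C)%MS <= Q)%MS by apply: fQ.
have xQc : (x *m row_base (Q^C)%MS <= Q^C)%MS.
  by rewrite (submx_trans (submxMl _ _)) // eq_row_base.
have : (x *m row_base (Q^C)%MS <= Q :&: Q^C)%MS by rewrite sub_capmx xQ xQc.
rewrite capmx_compl submx0 mulmx_free_eq0 ?row_base_free //.
by move/eqP.
Qed.

Lemma psi_inj x y : psi x = psi y -> x = y.
Proof.
move=> h; apply/eqP; rewrite -subr_eq0; apply/eqP/psi_eq0.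
by rewrite psiD psiN h subrr.
Qed.

Lemma span_psi y : span_seq s y <-> exists x, y = psi x.
Proof.
rewrite span_phi; split => [[c ->]|[x ->]]; last by exists (x *m row_base (Q^C)%MS).
have : (c <= Q + Q^C)%MS by apply: submx_full; exact: addsmx_compl_full.
move=> /sub_addsmxP [u ->]; rewrite phiD kQ add0r.
have : (u.2 *m Q^C <= row_base (Q^C))%MS by rewrite eq_row_base submxMl.
by move=> /submxP [x ->]; exists x.
Qed.

Lemma mat_of (f : M -> M) : linear f -> (forall y, span_seq s y -> span_seq s (f y)) ->
  exists A : 'M[C]_rk, forall x, psi (x *m A) = f (psi x).
Proof.
move=> lf sf; have [f0 fD fZ] := lin_props lf.
have fsum : forall (I : Type) (r : seq I) (F : I -> M),
    f (\sum_(i <- r) F i) = \sum_(i <- r) f (F i).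
  by move=> I r F; exact: (big_morph f fD f0).
have : forall i : 'I_rk, exists x, psi x = f (psi (delta_mx 0 i)).
  move=> i; have /sf /span_psi [x ->] : span_seq s (psi (delta_mx 0 i)).
    by apply/span_psi; exists (delta_mx 0 i).
  by exists x.
move=> /fin_all_exists [g hg].
exists (\matrix_(i < rk) g i) => x.
rewrite mulmx_sum_row psi_sum {2}(row_sum_delta x) psi_sum fsum.
  by apply: eq_bigr => i _; rewrite !psiZ fZ rowK hg.
Qed.

Lemma mat_eq (A B : 'M[C]_rk) : (forall x, psi (x *m A) = psi (x *m B)) -> A = B.
Proof. by move=> h; apply/row_matrixP => i; rewrite !rowE; apply: psi_inj. Qed.
End Psi.
End Lin.

Lemma part1 (R : realType) (M : lmodType R[i])
    (d h : int -> M -> M) (c1 c2 : M -> M)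
    (HD : is_Dmodule d h c1 c2)
    (Hnz : exists x : M, x != 0)
    (Hlf : Dplus_locally_finite d h) :
  exists v : M, v != 0 /\ Dplus_stable_line d h v.
Proof.
case: HD => [[ld lh _ _] hdd hdh hhh _].
case: Hnz => v0 v00; case: (Hlf v0) => s [sv0 [sd sh]].
have [Q [kQ fQ]] := exists_ker s.
have exD : forall m : int, exists A : 'M[R[i]]_(rk Q),
    (1 <= m) -> forall x, psi (Q := Q) (x *m A) = d m (psi (Q := Q) x).
  move=> m; have [m1|m1] := boolP (1 <= m).
    have [A hA] := mat_of kQ (ld m) (sd m m1); by exists A.
  by exists 0.
have exH : forall k : int, exists A : 'M[R[i]]_(rk Q),
    (0 <= k) -> forall x, psi (Q := Q) (x *m A) = h k (psi (Q := Q) x).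
  move=> k; have [k0|k0] := boolP (0 <= k).
    have [A hA] := mat_of kQ (lh k) (sh k k0); by exists A.
  by exists 0.
pose Dm m := proj1_sig (ClassicalEpsilon.constructive_indefinite_description _ (exD m)).
pose Hm k := proj1_sig (ClassicalEpsilon.constructive_indefinite_description _ (exH k)).
have hD : forall m, 1 <= m -> forall x, psi (Q := Q) (x *m Dm m) = d m (psi (Q := Q) x).
  by move=> m; rewrite /Dm; case: ClassicalEpsilon.constructive_indefinite_description.
have hH : forall k, 0 <= k -> forall x, psi (Q := Q) (x *m Hm k) = h k (psi (Q := Q) x).
  by move=> k; rewrite /Hm; case: ClassicalEpsilon.constructive_indefinite_description.
have psiB : forall x (A B : 'M[R[i]]_(rk Q)), psi (Q := Q) (x *m (A - B)) = psi (Q := Q) (x *m A) - psi (Q := Q) (x *m B).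
  by move=> x A B; rewrite mulmxBr psiD psiN.
have RD : forall m l : int, 1 <= m -> 1 <= l ->
    Dm l *m Dm m - Dm m *m Dm l = (m - l)%:~R *: Dm (m + l).
  move=> m l m1 l1; apply: (mat_eq fQ) => x.
  rewrite psiB !mulmxA (hD m) // (hD l) // (hD l) // (hD m) //.
  rewrite -scalemxAr psiZ (hD (m + l)); last lia.
  rewrite hdd; have -> : (m + l == 0) = false by apply/eqP; lia.
  by rewrite addr0.
have RDH : forall m k : int, 1 <= m -> 0 <= k ->
    Hm k *m Dm m - Dm m *m Hm k = - (fun k0 : int => k0%:~R + 2^-1) k *: Hm (m + k).
  move=> m k m1 k0; apply: (mat_eq fQ) => x.
  rewrite psiB !mulmxA hD // hH // hH // hD //.
  by rewrite -scalemxAr psiZ hH; [rewrite hdh | lia].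
have RH : forall k l : int, 0 <= k -> 0 <= l -> Hm l *m Hm k - Hm k *m Hm l = 0.
  move=> k l k0 l0; apply: (mat_eq fQ) => x.
  rewrite psiB !mulmxA !hH // hhh mulmx0 psi0.
  by have -> : (k + l + 1 == 0) = false by apply/eqP; lia.
have n0 : (0 < rk Q)%N.
  have /(span_psi kQ) [x0 ex0] := sv0.
  have : x0 != 0 by apply: contraNneq v00 => x00; rewrite ex0 x00 psi0.
  by case/rV0Pn => i _; apply: leq_ltn_trans (ltn_ord i).
have [c [c0 cD cH]] := core_common_eigenvector RD RDH RH n0.
exists (psi (Q := Q) c); split.
  by apply: contraNneq c0 => /(psi_eq0 fQ) ->.
split.
  by move=> m m1; have [a ha] := cD m m1; exists a; rewrite -hD // ha psiZ.
by move=> k k0; have [a ha] := cH k k0; exists a; rewrite -hH // ha psiZ.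
Qed.

Lemma part2 (R : realType) (M : lmodType R[i])
    (d h : int -> M -> M) (c1 c2 : M -> M)
    (HD : is_Dmodule d h c1 c2) (v : M) :
  v != 0 -> Dplus_stable_line d h v -> Dsimple d h c1 c2 ->
  is_Whittaker_module d h c1 c2.
Proof.
move=> v0 [sD sH] [_ hS].
case: HD => [[ld lh _ _] hdd hdh hhh _].
have exd : forall m : int, exists a : R[i], (1 <= m) ==> (d m v == a *: v).
  move=> m; have [m1|m1] := boolP (1 <= m); last by exists 0.
  by have [a ha] := sD m m1; exists a; rewrite ha eqxx.
have exh : forall k : int, exists a : R[i], (0 <= k) ==> (h k v == a *: v).
  move=> k; have [k0|k0] := boolP (0 <= k); last by exists 0.
  by have [a ha] := sH k k0; exists a; rewrite ha eqxx.
pose pd m := xchoose (exd m); pose ph k := xchoose (exh k).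
have hpd : forall m, 1 <= m -> d m v = pd m *: v.
  by move=> m m1; move/implyP: (xchooseP (exd m)) => /(_ m1) /eqP.
have hph : forall k, 0 <= k -> h k v = ph k *: v.
  by move=> k k0; move/implyP: (xchooseP (exh k)) => /(_ k0) /eqP.
have scal0 : forall a : R[i], a *: v = 0 -> a = 0.
  by move=> a /eqP; rewrite scaler_eq0 (negbTE v0) orbF => /eqP.
exists v; split => //.
  move=> W hW Wv x; case: (hS W hW) => [h0|//].
  by move: v0; rewrite (h0 _ Wv) eqxx.
exists pd, ph; split => //; split.
  move=> m n m1 n1; apply: scal0.
  have := hdd m n v; rewrite (hpd n) // (hpd m) //.
  have [_ _ Zm] := lin_props (ld m); have [_ _ Zn] := lin_props (ld n).
  rewrite Zm Zn (hpd n) // (hpd m) // !scalerA mulrC subrr.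
  have -> : (m + n == 0) = false by apply/eqP; lia.
  by rewrite addr0 (hpd (m + n)); [move=> hh; rewrite -scalerA -hh | lia].
move=> m k m1 k0; apply: scal0.
have := hdh m k v; rewrite (hph k) // (hpd m) //.
have [_ _ Zm] := lin_props (ld m); have [_ _ Zk] := lin_props (lh k).
rewrite Zm Zk (hph k) // (hpd m) // !scalerA mulrC subrr.
by rewrite (hph (m + k)); [move=> hh; rewrite -scalerA -hh | lia].
Qed.

Unset Implicit Arguments.
Theorem theorem6p3 (R : realType) (M : lmodType R[i])
    (d h : int -> M -> M) (c1 c2 : M -> M)
    (HD : is_Dmodule d h c1 c2)
    (Hnz : exists x : M, x != 0)
    (Hlf : Dplus_locally_finite d h) :
  (exists v : M, v != 0 /\ Dplus_stable_line d h v) /\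
  (Dsimple d h c1 c2 ->
     is_Whittaker_module d h c1 c2 \/ is_highest_weight_module d h c1 c2).
Proof.
have [v [v0 sv]] := part1 HD Hnz Hlf.
split; first by exists v.
by move=> hs; left; exact: (part2 HD v0 sv hs).
Qed.
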